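(* Let $a,b,c,d$ be non-negative integers with $\gcd(a,b,c,d)=1$ satisfying $(a+b+c+d)^2=2(a^2+b^2+c^2+d^2)$. Then the sum of any two of them is a sum of two squares of integers; e.g. $a+b=p^2+q^2$ for some $p,q\in\mathbb{Z}$. *)

(* Defs.v *)
From Stdlib Require Import ZArith.
Open Scope Z_scope.

Definition sum_two_squares (n : Z) : Prop := exists p q : Z, n = p ^ 2 + q ^ 2.

(* Main.v *)
Require Import Defs.
From Stdlib Require Import ZArith Znumtheory Lia.
Open Scope Z_scope.

Lemma sts_mul a b : sum_two_squares a -> sum_two_squares b -> sum_two_squares (a*b).
Proof.
  intros [p [q ->]] [r [s ->]]. exists (p*r - q*s), (p*s + q*r). ring.
Qed.

Lemma sts_sq p : sum_two_squares (p*p).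
Proof. exists p, 0. ring. Qed.

Lemma cmod x m : 0 < m -> exists u k, x = u + m * k /\ 4 * u^2 <= m^2.
Proof.
  intros Hm.
  pose proof (Z.div_mod x m ltac:(lia)) as Hd.
  pose proof (Z.mod_pos_bound x m Hm) as Hb.
  destruct (Z_le_gt_dec (2 * (x mod m)) m).
  - exists (x mod m), (x / m). split; [lia|]. nia.
  - exists (x mod m - m), (x / m + 1). split; [lia|]. nia.
Qed.

Lemma desc : forall m, 0 <= m -> forall p x y, prime p -> 0 < m < p ->
  p * m = x^2 + y^2 -> sum_two_squares p.
Proof.
  intros m0 Hm0. pattern m0. apply Z_lt_induction; [|exact Hm0].
  clear m0 Hm0. intros m IH p x y Hp Hmp Heq.
  destruct (Z.eq_dec m 1) as [->|Hm1].
  { exists x, y. lia. }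
  destruct (cmod x m ltac:(lia)) as [u [s [Hx Hu]]].
  destruct (cmod y m ltac:(lia)) as [v [t [Hy Hv]]].
  set (r := p - 2*(s*u+t*v) - m*(s^2+t^2)).
  assert (Huv : u^2 + v^2 = m * r).
  { unfold r. subst x y. lia. }
  assert (Hp' : p = r + 2*(s*u+t*v) + m*(s^2+t^2)) by (unfold r; ring).
  clearbody r.
  assert (Hr0 : 0 <= r) by (clear -Huv Hmp; nia).
  assert (Hrm : r < m) by (clear -Huv Hmp Hm1 Hu Hv; nia).
  destruct (Z.eq_dec r 0) as [Hr|Hr].
  { exfalso. subst r. rewrite Z.mul_0_r in Huv. assert (u = 0) by (clear -Huv; nia). assert (v = 0) by (clear -Huv; nia). subst u v.
    assert (Hd : (m | p)). { exists (s^2+t^2). rewrite Hp'. ring. }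
    destruct (prime_divisors p Hp m Hd) as [H|[H|[H|H]]]; lia. }
  apply (IH r ltac:(lia) p (r + s*u + t*v) (s*v - t*u) Hp ltac:(lia)).
  assert (E : (r + s*u + t*v)^2 + (s*v - t*u)^2
              = r^2 + 2*r*(s*u+t*v) + (s^2+t^2)*(u^2+v^2)) by ring.
  rewrite E, Huv, Hp'. ring.
Qed.

Lemma prime_sts p x y : prime p -> (p | x^2 + y^2) -> ~ (p | x) -> sum_two_squares p.
Proof.
  intros Hp [k Hk] Hnx.
  pose proof (prime_ge_2 p Hp) as H2.
  destruct (cmod x p ltac:(lia)) as [u [s [Hx Hu]]].
  destruct (cmod y p ltac:(lia)) as [v [t [Hy Hv]]].
  set (m := k - 2*(s*u+t*v) - p*(s^2+t^2)).
  assert (Huv : p * m = u^2 + v^2).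
  { unfold m. subst x y. lia. }
  clearbody m.
  assert (Hm0 : 0 <= m) by (clear -Huv H2; nia).
  apply (desc m Hm0 p u v Hp); [|exact Huv].
  split; [|clear -Huv H2 Hu Hv; nia].
  destruct (Z.eq_dec m 0) as [H0|H0]; [|lia].
  exfalso. subst m. rewrite Z.mul_0_r in Huv. assert (u = 0) by (clear -Huv; nia).
  subst u. apply Hnx. exists s. lia.
Qed.

Lemma euler_quot_aux p u v X Y : prime p -> p = u^2 + v^2 -> (p | X^2 + Y^2) ->
  (p | X*v - Y*u) ->
  exists X' Y', X^2 + Y^2 = p * (X'^2 + Y'^2) /\
    (forall k, (k | X') -> (k | Y') -> (k | X) /\ (k | Y)).
Proof.
  intros Hp Hpu [N HN] [B HB].
  pose proof (prime_ge_2 p Hp) as H2.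
  assert (Hd : (p | (X*u + Y*v) * (X*u + Y*v))).
  { exists (N*p - B^2 * p). 
    assert (E : (X*u+Y*v)*(X*u+Y*v) = (X^2+Y^2)*(u^2+v^2) - (X*v-Y*u)^2) by ring.
    rewrite E, HN, HB, <- Hpu. ring. }
  assert (Hd2 : (p | X*u+Y*v)) by (destruct (prime_mult p Hp _ _ Hd); auto).
  destruct Hd2 as [A HA].
  exists A, B; split.
  - apply (Z.mul_reg_l _ _ p); [lia|].
    assert (E : p * (p * (A^2+B^2)) = (A*p)^2 + (B*p)^2) by ring.
    rewrite E, <- HA, <- HB, HN.
    assert (E2 : (X*u+Y*v)^2 + (X*v-Y*u)^2 = (X^2+Y^2)*(u^2+v^2)) by ring.
    rewrite E2, HN, <- Hpu. ring.
  - assert (EX : X = A*u + B*v).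
    { apply (Z.mul_reg_l _ _ p); [lia|].
      assert (E : p * (A*u+B*v) = (A*p)*u + (B*p)*v) by ring.
      rewrite E, <- HA, <- HB. rewrite Hpu at 1. ring. }
    assert (EY : Y = A*v - B*u).
    { apply (Z.mul_reg_l _ _ p); [lia|].
      assert (E : p * (A*v-B*u) = (A*p)*v - (B*p)*u) by ring.
      rewrite E, <- HA, <- HB. rewrite Hpu at 1. ring. }
    intros k Hk1 Hk2. rewrite EX, EY. split.
    + apply Z.divide_add_r; apply Z.divide_mul_l; assumption.
    + apply Z.divide_sub_r; apply Z.divide_mul_l; assumption.
Qed.

Lemma euler_quot p u v X Y : prime p -> p = u^2 + v^2 -> (p | X^2 + Y^2) ->
  exists X' Y', X^2 + Y^2 = p * (X'^2 + Y'^2) /\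
    (forall k, (k | X') -> (k | Y') -> (k | X) /\ (k | Y)).
Proof.
  intros Hp Hpu HN.
  assert (Hd : (p | (X*v - Y*u) * (X*v + Y*u))).
  { destruct HN as [N HN]. exists (v^2 * N - Y^2).
    assert (E : (X*v - Y*u) * (X*v + Y*u) = v^2 * (X^2+Y^2) - Y^2 * (u^2+v^2)) by ring.
    rewrite E, HN, <- Hpu. ring. }
  destruct (prime_mult p Hp _ _ Hd) as [H|H].
  - exact (euler_quot_aux p u v X Y Hp Hpu HN H).
  - apply (euler_quot_aux p u (-v) X Y Hp); auto.
    + rewrite Hpu. ring.
    + replace (X * - v - Y * u) with (-(X*v+Y*u)) by ring.
      apply Z.divide_opp_r. exact H.
Qed.

Lemma prime_div_exists : forall n, 1 < n -> exists p, prime p /\ (p | n).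
Proof.
  intros n0 Hn0. assert (H0 : 0 <= n0) by lia. revert Hn0. pattern n0.
  apply Z_lt_induction; [|exact H0]. clear n0 H0.
  intros n IH Hn.
  destruct (prime_dec n) as [Hp|Hp].
  - exists n. split; [exact Hp| apply Z.divide_refl].
  - destruct (not_prime_divide n Hn Hp) as [d [Hd Hdn]].
    destruct (IH d ltac:(lia) ltac:(lia)) as [p [Hp1 Hp2]].
    exists p. split; [exact Hp1|]. eapply Z.divide_trans; eauto.
Qed.

Lemma mainT : forall P, 0 <= P -> forall R X Y, 0 < P -> P * R = X^2 + Y^2 ->
  (forall k, (k | P) -> (k | R) -> (k | X) -> (k | Y) -> (k | 2)) ->
  sum_two_squares P.
Proof.
  intros P0 HP0. pattern P0. apply Z_lt_induction; [|exact HP0]. clear P0 HP0.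
  intros P IH R X Y HP HPR Hk.
  destruct (Z.eq_dec P 1) as [->|HP1].
  { exists 1, 0. ring. }
  destruct (prime_div_exists P ltac:(lia)) as [p [Hp [P1 HP1e]]].
  pose proof (prime_ge_2 p Hp) as H2.
  assert (HP1pos : 0 < P1) by (clear -HP1e HP H2; nia).
  assert (HP1lt : P1 < P) by (clear -HP1e HP H2 HP1pos; nia).
  destruct (Zdivide_dec p X) as [[X1 HX]|HX];
  [destruct (Zdivide_dec p Y) as [[Y1 HY]|HY]|].
  - destruct (Zdivide_dec p R) as [[R1 HR]|HR].
    + assert (Hp2 : (p | 2)) by (apply Hk; [exists P1; exact HP1e | exists R1; exact HR
                                    | exists X1; exact HX | exists Y1; exact HY]).
      apply Z.divide_pos_le in Hp2; [|lia].
      assert (p = 2) by lia. subst p.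
      assert (E : P1 * R1 = X1^2 + Y1^2).
      { apply (Z.mul_reg_l _ _ 4); [lia|].
        assert (E : 4 * (P1 * R1) = P * R) by (rewrite HP1e, HR; ring).
        rewrite E, HPR, HX, HY. ring. }
      rewrite HP1e. apply sts_mul; [|exists 1, 1; ring].
      apply (IH P1 ltac:(lia) R1 X1 Y1 HP1pos E).
      intros k Hk1 Hk2 Hk3 Hk4.
      assert (Hk' : (2 * k | 2 * 1)).
      { rewrite Z.mul_1_r. apply Hk.
        - rewrite HP1e, (Z.mul_comm P1 2). apply Z.mul_divide_mono_l. exact Hk1.
        - rewrite HR, (Z.mul_comm R1 2). apply Z.mul_divide_mono_l. exact Hk2.
        - rewrite HX, (Z.mul_comm X1 2). apply Z.mul_divide_mono_l. exact Hk3.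
        - rewrite HY, (Z.mul_comm Y1 2). apply Z.mul_divide_mono_l. exact Hk4. }
      apply Z.mul_divide_cancel_l in Hk'; [|lia].
      apply (Z.divide_trans _ 1); [exact Hk'|exists 2; ring].
    + assert (HpP1 : (p | P1 * R)).
      { exists (X1^2 + Y1^2). apply (Z.mul_reg_l _ _ p); [lia|].
        assert (E : p * (P1 * R) = P * R) by (rewrite HP1e; ring).
        rewrite E, HPR, HX, HY. ring. }
      destruct (prime_mult p Hp _ _ HpP1) as [[P2 HP2]|HpR]; [|contradiction].
      assert (HP2pos : 0 < P2) by (clear -HP2 HP1pos H2; nia).
      assert (HP2lt : P2 < P).
      { rewrite HP1e, HP2. assert (Hpp : 4 <= p*p) by (clear -H2; nia). clear -HP2pos Hpp. nia. }
      assert (E : P2 * R = X1^2 + Y1^2).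
      { apply (Z.mul_reg_l _ _ (p*p)); [lia|].
        assert (E : p * p * (P2 * R) = P * R) by (rewrite HP1e, HP2; ring).
        rewrite E, HPR, HX, HY. ring. }
      rewrite HP1e, HP2, <- Z.mul_assoc. apply sts_mul; [|apply sts_sq].
      apply (IH P2 ltac:(lia) R X1 Y1 HP2pos E).
      intros k Hk1 Hk2 Hk3 Hk4. apply Hk; auto.
      * rewrite HP1e, HP2, <- Z.mul_assoc. apply Z.divide_mul_l. exact Hk1.
      * rewrite HX. apply Z.divide_mul_l. exact Hk3.
      * rewrite HY. apply Z.divide_mul_l. exact Hk4.
  -
    assert (Hsum : (p | Y^2 + X^2)).
    { exists (P1 * R). rewrite Z.add_comm, <- HPR, HP1e. ring. }
    assert (Hps : sum_two_squares p) by exact (prime_sts p Y X Hp Hsum HY).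
    destruct Hps as [u [v Huv]].
    assert (Hsum' : (p | X^2 + Y^2)) by (rewrite Z.add_comm; exact Hsum).
    destruct (euler_quot p u v X Y Hp Huv Hsum') as [X' [Y' [HE Hdv]]].
    assert (E : P1 * R = X'^2 + Y'^2).
    { apply (Z.mul_reg_l _ _ p); [lia|]. rewrite <- HE, <- HPR, HP1e. ring. }
    rewrite HP1e. apply sts_mul; [|exists u, v; exact Huv].
    apply (IH P1 ltac:(lia) R X' Y' HP1pos E).
    intros k Hk1 Hk2 Hk3 Hk4. destruct (Hdv k Hk3 Hk4). apply Hk; auto.
    rewrite HP1e. apply Z.divide_mul_l. exact Hk1.
  - assert (Hsum : (p | X^2 + Y^2)).
    { exists (P1 * R). rewrite <- HPR, HP1e. ring. }
    assert (Hps : sum_two_squares p) by exact (prime_sts p X Y Hp Hsum HX).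
    destruct Hps as [u [v Huv]].
    destruct (euler_quot p u v X Y Hp Huv Hsum) as [X' [Y' [HE Hdv]]].
    assert (E : P1 * R = X'^2 + Y'^2).
    { apply (Z.mul_reg_l _ _ p); [lia|]. rewrite <- HE, <- HPR, HP1e. ring. }
    rewrite HP1e. apply sts_mul; [|exists u, v; exact Huv].
    apply (IH P1 ltac:(lia) R X' Y' HP1pos E).
    intros k Hk1 Hk2 Hk3 Hk4. destruct (Hdv k Hk3 Hk4). apply Hk; auto.
    rewrite HP1e. apply Z.divide_mul_l. exact Hk1.
Qed.

Lemma pair_sts a b c d : 0 <= a -> 0 <= b ->
  (forall k, (k | a) -> (k | b) -> (k | c) -> (k | d) -> (k | 1)) ->
  (a + b + c + d) ^ 2 = 2 * (a ^ 2 + b ^ 2 + c ^ 2 + d ^ 2) ->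
  sum_two_squares (a + b).
Proof.
  intros ha hb hk heq.
  destruct (Z.eq_dec (a + b) 0) as [H0|H0].
  { rewrite H0. exists 0, 0. ring. }
  assert (Hev : (2 | (a+b+c+d) * (a+b+c+d))).
  { exists (a^2+b^2+c^2+d^2). rewrite <- Z.pow_2_r, heq. ring. }
  assert (Hev2 : (2 | a+b+c+d)) by (destruct (prime_mult 2 prime_2 _ _ Hev); auto).
  destruct Hev2 as [e He].
  assert (Hd : d = e * 2 - a - b - c) by lia. subst d.
  apply (mainT (a+b) ltac:(lia) (c + (e*2-a-b-c)) (e - b - (e*2-a-b-c)) (e - b - c)); [lia| |].
  - apply (Z.mul_reg_l _ _ 4); [lia|].
    ring_simplify. ring_simplify in heq. lia.
  - set (d := e * 2 - a - b - c) in *.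
    set (P := a+b). set (R := c + d). set (X := e - b - d). set (Y := e - b - c).
    intros k Hk1 Hk2 Hk3 Hk4.
    assert (Ha : (k | 2 * a)).
    { replace (2*a) with (P + X + Y) by (unfold P, X, Y, d; lia).
      apply Z.divide_add_r; [apply Z.divide_add_r|]; assumption. }
    assert (Hb : (k | 2 * b)).
    { replace (2*b) with (P - X - Y) by (unfold P, X, Y, d; lia).
      apply Z.divide_sub_r; [apply Z.divide_sub_r|]; assumption. }
    assert (Hc : (k | 2 * c)).
    { replace (2*c) with (R + X - Y) by (unfold R, X, Y, d; lia).
      apply Z.divide_sub_r; [apply Z.divide_add_r|]; assumption. }
    assert (Hdd : (k | 2 * d)).
    { replace (2*d) with (R - X + Y) by (unfold R, X, Y, d; lia).
      apply Z.divide_add_r; [apply Z.divide_sub_r|]; assumption. }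
    assert (Hg : (k | Z.gcd (Z.gcd (2*a) (2*b)) (Z.gcd (2*c) (2*d)))).
    { repeat apply Z.gcd_greatest; assumption. }
    rewrite !Z.gcd_mul_mono_l in Hg. simpl (Z.abs 2) in Hg.
    assert (Hg1 : Z.gcd (Z.gcd a b) (Z.gcd c d) = 1).
    { apply Z.divide_1_r_nonneg; [apply Z.gcd_nonneg|].
      apply hk.
      - apply (Z.divide_trans _ (Z.gcd a b)); [apply Z.gcd_divide_l|apply Z.gcd_divide_l].
      - apply (Z.divide_trans _ (Z.gcd a b)); [apply Z.gcd_divide_l|apply Z.gcd_divide_r].
      - apply (Z.divide_trans _ (Z.gcd c d)); [apply Z.gcd_divide_r|apply Z.gcd_divide_l].
      - apply (Z.divide_trans _ (Z.gcd c d)); [apply Z.gcd_divide_r|apply Z.gcd_divide_r]. }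
    rewrite Hg1, Z.mul_1_r in Hg. exact Hg.
Qed.

Theorem proposition1 (a b c d : Z)
  (ha : 0 <= a) (hb : 0 <= b) (hc : 0 <= c) (hd : 0 <= d)
  (hgcd : Z.gcd (Z.gcd a b) (Z.gcd c d) = 1)
  (heq : (a + b + c + d) ^ 2 = 2 * (a ^ 2 + b ^ 2 + c ^ 2 + d ^ 2)) :
  sum_two_squares (a + b) /\ sum_two_squares (a + c) /\ sum_two_squares (a + d) /\
  sum_two_squares (b + c) /\ sum_two_squares (b + d) /\ sum_two_squares (c + d).
Proof.
  assert (hk : forall k, (k | a) -> (k | b) -> (k | c) -> (k | d) -> (k | 1)).
  { intros k h1 h2 h3 h4. rewrite <- hgcd.
    apply Z.gcd_greatest; apply Z.gcd_greatest; assumption. }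
  repeat split.
  - apply (pair_sts a b c d); auto.
  - apply (pair_sts a c b d ha hc); [intros k h1 h2 h3 h4; apply hk; auto|].
    replace (a+c+b+d) with (a+b+c+d) by ring. rewrite heq; ring.
  - apply (pair_sts a d b c ha hd); [intros k h1 h2 h3 h4; apply hk; auto|].
    replace (a+d+b+c) with (a+b+c+d) by ring. rewrite heq; ring.
  - apply (pair_sts b c a d hb hc); [intros k h1 h2 h3 h4; apply hk; auto|].
    replace (b+c+a+d) with (a+b+c+d) by ring. rewrite heq; ring.
  - apply (pair_sts b d a c hb hd); [intros k h1 h2 h3 h4; apply hk; auto|].
    replace (b+d+a+c) with (a+b+c+d) by ring. rewrite heq; ring.
  - apply (pair_sts c d a b hc hd); [intros k h1 h2 h3 h4; apply hk; auto|].
    replace (c+d+a+b) with (a+b+c+d) by ring. rewrite heq; ring.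
Qed.
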